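(* Let $T$ be a tree with $p\ge 4$ pendant vertices and let $u_1,u_2,u_3,u_4$ be four distinct pendant vertices of $T$. Let $H=\bigcup_{1\le i<j\le 4}P_{u_i,u_j}$ be the minimal subtree of $T$ containing these four vertices. If $m(T,1)\ge p-2$, then $m(H,1)\ge 2$.
   Context: $m(G,\lambda)$ denotes the multiplicity of $\lambda$ as an eigenvalue of the Laplacian matrix $L(G)=D(G)-A(G)$ (zero if not an eigenvalue). A pendant vertex has degree $1$. $P_{r,s}$ is the path in $T$ from $r$ to $s$. *)

(* Defs.v *)
From HB Require Import structures.
From mathcomp Require Import all_boot all_order all_algebra.
From Stdlib Require Import ClassicalEpsilon.
Set Implicit Arguments. Unset Strict Implicit. Unset Printing Implicit Defensive.
Import Order.TTheory GRing.Theory Num.Theory.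

Definition deg (V : finType) (e : rel V) (x : V) : nat := #|[set y | e x y]|.

Definition pendant (V : finType) (e : rel V) (x : V) : bool := deg e x == 1%N.

Definition npendant (V : finType) (e : rel V) : nat := #|[set x | pendant e x]|.

(* a tree: simple (symmetric, irreflexive), connected, with |V|-1 edges
   (ordered adjacent pairs counted: 2(|V|-1)) *)
Definition is_tree (V : finType) (e : rel V) : Prop :=
  symmetric e /\ irreflexive e /\ (forall x y, connect e x y) /\
  #|[set p : V * V | e p.1 p.2]| = (2 * #|V|.-1)%N.

Definition laplacian (V : finType) (e : rel V) : 'M[rat]_#|V| :=
  \matrix_(i, j)
    ((if enum_val i == enum_val j then (deg e (enum_val i))%:R else 0)
     - (e (enum_val i) (enum_val j))%:R)%R.

(* m(G, lambda): multiplicity of lambda as an eigenvalue of L(G)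
   (root multiplicity in the characteristic polynomial; 0 if not a root) *)
Definition lap_mult (V : finType) (e : rel V) (l : rat) : nat :=
  mup l (char_poly (laplacian e))%R.

Definition on_path (V : finType) (e : rel V) (u v x : V) : Prop :=
  exists s : seq V, [&& path e u s, last u s == v, uniq (u :: s) & x \in u :: s].

Definition on_pathb (V : finType) (e : rel V) (u v x : V) : bool :=
  if excluded_middle_informative (on_path e u v x) then true else false.

Definition hull4 (V : finType) (e : rel V) (u1 u2 u3 u4 : V) : {set V} :=
  [set x | [|| on_pathb e u1 u2 x, on_pathb e u1 u3 x, on_pathb e u1 u4 x,
              on_pathb e u2 u3 x, on_pathb e u2 u4 x | on_pathb e u3 u4 x]].

Definition induced (V : finType) (e : rel V) (S : {set V}) :
  rel {x : V | x \in S} := fun x y => e (val x) (val y).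
Arguments induced {V} e S _ _.

(* Main.v *)
Require Import Defs.
From mathcomp Require Import all_boot all_order all_algebra.
From mathcomp Require Import zify.
From Stdlib Require Import Classical ClassicalEpsilon.
Set Implicit Arguments. Unset Strict Implicit. Unset Printing Implicit Defensive.
Import Order.TTheory GRing.Theory Num.Theory.

Section LA.
Local Open Scope ring_scope.
Variable F : fieldType.

Lemma char_poly_castmx n m (eq : n = m) (A : 'M[F]_n) :
  char_poly (castmx (eq, eq) A) = char_poly A.
Proof. by case: m / eq; rewrite castmx_id. Qed.

Lemma eigen_castmx n m (eq : n = m) (A : 'M[F]_n) a :
  \rank (eigenspace (castmx (eq, eq) A) a) = \rank (eigenspace A a).
Proof. by case: m / eq; rewrite castmx_id. Qed.

Lemma char_poly_conj n (P A : 'M[F]_n) : P \in unitmx ->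
  char_poly (P *m A *m invmx P) = char_poly A.
Proof.
move=> uP; rewrite /char_poly /char_poly_mx.
set Pp := map_mx polyC P; set Qp := map_mx polyC (invmx P).
have PQ : Pp *m Qp = 1%:M by rewrite -map_mxM mulmxV // map_mx1.
have -> : 'X%:M - map_mx polyC (P *m A *m invmx P) =
   Pp *m ('X%:M - map_mx polyC A) *m Qp.
  rewrite mulmxBr mulmxBl !map_mxM mul_mx_scalar -scalemxAl PQ.
  by rewrite -mulmxA scalemx1.
rewrite !det_mulmx mulrC mulrA -det_mulmx mulmxE.
have -> : Qp * Pp = 1.
  by rewrite -mulmxE -map_mxM mulVmx // map_mx1.
by rewrite det1 mul1r.
Qed.

Lemma char_poly_scalar k (a : F) : char_poly (a%:M : 'M_k) = ('X - a%:P) ^+ k.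
Proof.
rewrite char_poly_trig; last first.
  by apply/is_trig_mxP => i j lt; rewrite !mxE -val_eqE /= (ltn_eqF lt).
rewrite (eq_bigr (fun=> ('X - a%:P))) ?prodr_const ?card_ord // => i _.
by rewrite mxE eqxx.
Qed.

Lemma char_poly_lblock k r (a : F) (Y : 'M_(r, k)) (C : 'M_r) :
  char_poly (block_mx (a%:M) 0 Y C) = ('X - a%:P) ^+ k * char_poly C.
Proof.
rewrite -char_poly_scalar /char_poly /char_poly_mx map_block_mx map_mx0.
rewrite scalar_mx_block opp_block_mx add_block_mx oppr0 addr0.
by rewrite det_lblock.
Qed.


Lemma core_decomp k r (A : 'M[F]_(k + r)) (K : 'M_(k, k + r)) (W : 'M_(r, k + r)) a :
  col_mx K W \in unitmx -> K *m A = a *: K ->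
  char_poly A = ('X - a%:P) ^+ k *
     char_poly (drsubmx (col_mx K W *m A *m invmx (col_mx K W))).
Proof.
move=> uP KA; set P := col_mx K W; set D := P *m A *m invmx P.
rewrite -(char_poly_conj A uP) -/D.
have uD : usubmx D = row_mx (a%:M) 0.
  have PQ : P *m invmx P = 1%:M by rewrite mulmxV.
  rewrite /D /P mul_col_mx mul_col_mx col_mxKu KA -scalemxAl.
  have : usubmx (P *m invmx P) = usubmx (1%:M : 'M_(k + r)) by rewrite PQ.
  rewrite /P mul_col_mx col_mxKu => ->.
  by rewrite scalar_mx_block block_mxEv col_mxKu scale_row_mx scalemx1 scaler0.
rewrite -[D]submxK /ulsubmx /ursubmx uD row_mxKl row_mxKr.
by rewrite block_mxKdr char_poly_lblock.
Qed.


Lemma col_mx_unit k r (K : 'M[F]_(k, k + r)) (W : 'M_(r, k + r)) :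
  \rank K = k -> \rank W = r -> (K :&: W = 0)%MS -> col_mx K W \in unitmx.
Proof.
move=> rK rW cap; rewrite -row_free_unit /row_free -addsmxE.
by rewrite mxrank_disjoint_sum // rK rW.
Qed.

Lemma alg_ge k r (A : 'M[F]_(k + r)) a :
  \rank (eigenspace A a) = k -> (k <= mup a (char_poly A))%N.
Proof.
move=> hk; set E := eigenspace A a.
pose K : 'M_(k, k + r) := castmx (hk, erefl) (row_base E).
have eK : (K :=: E)%MS by apply: eqmx_trans (eqmx_cast _ _) (eq_row_base _).
have rK : \rank K = k by rewrite eK.
have hr : \rank (K^C)%MS = r by rewrite mxrank_compl rK addKn.
pose W : 'M_(r, k + r) := castmx (hr, erefl) (row_base (K^C)%MS).
have eW : (W :=: (K^C)%MS)%MS by apply: eqmx_trans (eqmx_cast _ _) (eq_row_base _).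
have uP : col_mx K W \in unitmx.
  apply: col_mx_unit => //; first by rewrite eW.
  by apply/eqP; rewrite -submx0 (cap_eqmx (eqmx_refl K) eW) capmx_compl.
have KA : K *m A = a *: K by apply/eigenspaceP; rewrite eK.
rewrite (core_decomp uP KA) mup_geq ?dvdp_mulIl //.
by rewrite -(core_decomp uP KA) monic_neq0 // char_poly_monic.
Qed.

Lemma geom_le_alg n (A : 'M[F]_n) a :
  (\rank (eigenspace A a) <= mup a (char_poly A))%N.
Proof.
set k := \rank (eigenspace A a).
have eqn : n = (k + (n - k))%N by rewrite subnKC // rank_leq_col.
rewrite -(char_poly_castmx eqn A); apply: alg_ge.
by rewrite eigen_castmx.
Qed.

End LA.

Section LAsym.
Local Open Scope ring_scope.
Variable R : realFieldType.

Lemma self_dot0 n (v : 'rV[R]_n) : v *m v^T = 0 -> v = 0.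
Proof.
move=> /matrixP /(_ 0 0); rewrite !mxE => h.
have : forall i, (true : bool) -> v 0 i * v^T i 0 = 0.
  apply/psumr_eq0P => //= i _; rewrite mxE; exact: sqr_ge0.
by move=> H; apply/rowP => i; have /eqP := H i isT; rewrite !mxE -expr2 sqrf_eq0 => /eqP.
Qed.

Lemma alg_le k r (A : 'M[R]_(k + r)) a : A^T = A ->
  \rank (eigenspace A a) = k -> (mup a (char_poly A) <= k)%N.
Proof.
move=> sA hk; set E := eigenspace A a.
pose K : 'M_(k, k + r) := castmx (hk, erefl) (row_base E).
have eK : (K :=: E)%MS by apply: eqmx_trans (eqmx_cast _ _) (eq_row_base _).
have rK : \rank K = k by rewrite eK.
have hr : \rank (kermx K^T) = r by rewrite mxrank_ker mxrank_tr rK addKn.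
pose W : 'M_(r, k + r) := castmx (hr, erefl) (row_base (kermx K^T)).
have eW : (W :=: kermx K^T)%MS by apply: eqmx_trans (eqmx_cast _ _) (eq_row_base _).
have KA : K *m A = a *: K by apply/eigenspaceP; rewrite eK.
have capKW : forall v : 'rV_(k + r), (v <= K)%MS -> (v <= W)%MS -> v = 0.
  move=> v /submxP [c ->]; rewrite eW sub_kermx => /eqP h.
  apply: self_dot0; rewrite trmx_mul mulmxA.
  by rewrite h mul0mx.
have uP : col_mx K W \in unitmx.
  apply: col_mx_unit => //; first by rewrite eW.
  apply/eqP/rowV0P => v; rewrite sub_capmx => /andP [h1 h2].
  exact: capKW.
have WA : (W *m A <= W)%MS.
  rewrite eW sub_kermx -mulmxA.
  have -> : A *m K^T = a *: K^T by rewrite -{1}sA -trmx_mul KA linearZ.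
  have WK : W *m K^T = 0 by apply/eqP; rewrite -sub_kermx eW.
  by rewrite -scalemxAr WK scaler0.
set M := W *m A *m pinvmx W.
have WAM : W *m A = M *m W by rewrite mulmxKpV.
have dD : drsubmx (col_mx K W *m A *m invmx (col_mx K W)) = M.
  have PQ : col_mx K W *m invmx (col_mx K W) = 1%:M by rewrite mulmxV.
  have : dsubmx (col_mx K W *m invmx (col_mx K W)) = dsubmx (1%:M : 'M_(k + r)).
    by rewrite PQ.
  rewrite mul_col_mx col_mxKd scalar_mx_block block_mxEv col_mxKd => WQ.
  rewrite /drsubmx !mul_col_mx col_mxKd WAM -mulmxA WQ mul_mx_row mulmx0 mulmx1.
  by rewrite row_mxKr.
rewrite (core_decomp uP KA) dD mulrC mupMr; last first.
  rewrite -eigenvalue_root_char; apply/eigenvalueP => [[v vM vn0]].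
  have fW : row_free W by rewrite /row_free; apply/eqP; rewrite eW.
  have u0 : v *m W = 0.
    apply: capKW; last exact: submxMl.
    rewrite eK; apply/eigenspaceP.
    by rewrite -mulmxA WAM mulmxA vM scalemxAl.
  by move/eqP: u0; rewrite mulmx_free_eq0 // (negPf vn0).
by rewrite mup_XsubCX eqxx.
Qed.

Lemma alg_le_geom n (A : 'M[R]_n) a : A^T = A ->
  (mup a (char_poly A) <= \rank (eigenspace A a))%N.
Proof.
move=> sA; set k := \rank (eigenspace A a).
have eqn : n = (k + (n - k))%N by rewrite subnKC // rank_leq_col.
rewrite -(char_poly_castmx eqn A); apply: alg_le; last by rewrite eigen_castmx.
by move: eqn; move: (k + (n - k))%N => m eqn; case: m / eqn; rewrite castmx_id.
Qed.

End LAsym.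

Section Rooted.
Variables (V : finType) (e : rel V).
Hypothesis esym : symmetric e.
Hypothesis econn : forall x y, connect e x y.
Variable r : V.

Definition reach (v : V) (k : nat) : bool :=
  [exists t : k.-tuple V, path e r t && (last r t == v)].

Lemma reach_ex v : exists k, reach v k.
Proof.
case/connectP: (econn r v) => p pp ->; exists (size p).
by apply/existsP; exists (in_tuple p); rewrite /= pp eqxx.
Qed.

Definition dist v := ex_minn (reach_ex v).

Lemma distP v : reach v (dist v).
Proof. by rewrite /dist; case: ex_minnP. Qed.

Lemma dist_min v k : reach v k -> (dist v <= k)%N.
Proof. by rewrite /dist; case: ex_minnP => m _ H /H. Qed.

Lemma dist_r : dist r = 0%N.
Proof.
apply/eqP; rewrite -leqn0; apply: dist_min.
by apply/existsP; exists [tuple]; rewrite /= eqxx.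
Qed.

Lemma dist_edge w v : e w v -> (dist v <= (dist w).+1)%N.
Proof.
move=> ewv; apply: dist_min; case/existsP: (distP w) => t /andP [pt /eqP lt].
have sz : size (rcons t v) == (dist w).+1 by rewrite size_rcons size_tuple.
apply/existsP; exists (Tuple sz); rewrite /= rcons_path pt lt ewv last_rcons.
by rewrite eqxx.
Qed.

Lemma dist_pred v : v != r -> exists w, e w v && ((dist w).+1 == dist v).
Proof.
move=> vr; case/existsP: (distP v) => t /andP [pt /eqP lt].
move: pt lt; case/lastP: (tval t) (size_tuple t) => [|s z].
  by move=> _ _ /= vr'; rewrite vr' eqxx in vr.
rewrite size_rcons rcons_path last_rcons => sz /andP [ps ez] zv.
exists (last r s); rewrite -zv ez /=.
have rs : reach (last r s) (size s).
  have sz' : size s == size s by [].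
  by apply/existsP; exists (Tuple sz'); rewrite /= ps eqxx.
have h1 := dist_min rs; have h2 := dist_edge ez.
by rewrite eqn_leq h2 andbT zv -sz ltnS h1.
Qed.

Definition par v :=
  if [pick w | e v w && ((dist w).+1 == dist v)] is Some w then w else v.

Lemma par_r : par r = r.
Proof. by rewrite /par; case: pickP => // w /andP [_]; rewrite dist_r. Qed.

Lemma par_edge v : v != r -> e v (par v) /\ (dist (par v)).+1 = dist v.
Proof.
move=> vr; rewrite /par; case: pickP => [w /andP [ew /eqP dw] // | H].
case: (dist_pred vr) => w /andP [ew dw].
by move: (H w); rewrite /= esym ew dw.
Qed.

Lemma par_neq v : v != r -> par v != v.
Proof.
move=> vr; case: (par_edge vr) => _ h; apply/eqP => h'.
by rewrite h' in h; move: h; elim: (dist v) => // n IH [].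
Qed.

Hypothesis ecard : #|[set p : V * V | e p.1 p.2]| = (2 * #|V|.-1)%N.

Lemma edge_par a b : e a b -> a = par b \/ b = par a.
Proof.
move=> eab.
set D1 := [set (v, par v) | v in [set~ r]].
set D2 := [set (par v, v) | v in [set~ r]].
have c1 : #|D1| = #|V|.-1.
  rewrite card_imset ?cardsC1 // => x y [] //.
have c2 : #|D2| = #|V|.-1.
  rewrite card_imset ?cardsC1 // => x y [] //.
have dis : [disjoint D1 & D2].
  apply/pred0P => [[x y]] /=; apply/negP => /andP [].
  move=> /imsetP [v vr [-> ->]] /imsetP [w wr [h1 h2]].
  rewrite !inE in vr wr.
  case: (par_edge vr) => _; case: (par_edge wr) => _.
  rewrite -h1 h2; lia.
have sub : (D1 :|: D2) \subset [set p : V * V | e p.1 p.2].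
  apply/subsetP => [[x y]]; rewrite !inE => /orP [] /imsetP [v vr [-> ->]] /=;
  rewrite !inE in vr; case: (par_edge vr) => // h _; by rewrite esym.
have eq : D1 :|: D2 = [set p : V * V | e p.1 p.2].
  apply/eqP; rewrite eqEcard sub /= ecard cardsU.
  move: dis; rewrite -setI_eq0 => /eqP ->; rewrite cards0 c1 c2 subn0.
  by rewrite mul2n addnn.
have : (a, b) \in D1 :|: D2 by rewrite eq inE.
rewrite inE => /orP [] /imsetP [v vr [-> ->]]; by [right | left].
Qed.


Definition Anc (h z : V) : Prop := exists k, iter k par z = h.

Lemma edge_in h a b : e a b -> ~ Anc h a -> Anc h b -> a = par h.
Proof.
move=> eab nSa [k hk]; case: (edge_par eab) => [ab | ba].
  case: k hk => [/= bh | k hk]; first by rewrite ab bh.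
  exfalso; apply: nSa; exists k.
  by rewrite ab -iterSr.
by exfalso; apply: nSa; exists k.+1; rewrite iterSr -ba.
Qed.

Lemma enter h a s : path e a s -> ~ Anc h a ->
  (exists2 z, z \in a :: s & Anc h z) -> par h \in a :: s.
Proof.
elim: s a => [|b s IH] a /=.
  by move=> _ nSa [z]; rewrite inE => /eqP -> /nSa.
move=> /andP [eab ps] nSa [z zin Sz].
case: (classic (Anc h b)) => Sb.
  by rewrite (edge_in eab nSa Sb) inE eqxx.
rewrite inE IH ?orbT //; exists z => //.
move: zin; rewrite inE => /orP [/eqP za | //].
by exfalso; apply: nSa; rewrite -za.
Qed.

Lemma not_sub_r h : h != r -> ~ Anc h r.
Proof.
move=> hr [k]; suff -> : iter k par r = r by move=> rh; rewrite rh eqxx in hr.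
by elim: k => //= k ->; rewrite par_r.
Qed.

Lemma on_pathbP a b x : reflect (on_path e a b x) (on_pathb e a b x).
Proof. by rewrite /on_pathb; case: excluded_middle_informative => h; constructor. Qed.

Lemma path_exists a b : exists s, [&& path e a s, last a s == b & uniq (a :: s)].
Proof.
case/connectP: (econn a b) => p pp ->.
by case/shortenP: pp => p' pp' up' _; exists p'; rewrite pp' up' eqxx.
Qed.

Lemma on_path_par a b h : on_path e a b h -> ~ Anc h a -> on_path e a b (par h).
Proof.
case=> s /and4P [ps ls us hs] nSa; exists s; rewrite ps ls us /=.
by apply: enter => //; exists h => //; exists 0%N.
Qed.

Lemma sub_case a h : Anc h a -> h != r -> on_path e r a (par h).
Proof.
move=> Sa hr; case: (path_exists r a) => s /and3P [ps ls us].
exists s; rewrite ps ls us /=; apply: enter => //; first exact: not_sub_r.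
by exists a => //; rewrite -(eqP ls) mem_last.
Qed.

Lemma on_path_start a b : on_path e a b a.
Proof.
case: (path_exists a b) => s /and3P [ps ls us].
by exists s; rewrite ps ls us inE eqxx.
Qed.

Lemma on_path_end a b : on_path e a b b.
Proof.
case: (path_exists a b) => s /and3P [ps ls us].
by exists s; rewrite ps ls us -(eqP ls) mem_last.
Qed.

Variables u2 u3 u4 : V.
Let Hs := hull4 e r u2 u3 u4.

Lemma hull_par h : h \in Hs -> h != r -> par h \in Hs.
Proof.
move=> hH hr.
have key : forall a b, on_path e a b h -> on_pathb e a b (par h) \/ Anc h a.
  move=> a b oh; case: (classic (Anc h a)) => Sa; [by right | left].
  by apply/on_pathbP; apply: on_path_par.
have ra : forall a, Anc h a -> on_pathb e r a (par h).
  by move=> a Sa; apply/on_pathbP; apply: sub_case.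
have nr : ~ Anc h r by exact: not_sub_r.
move: hH; rewrite /Hs /hull4 !inE.
case/or4P => [/on_pathbP/key [->//|/nr//] | /on_pathbP/key [->|/nr//] |
  /on_pathbP/key [->|/nr//] | ]; rewrite ?orbT //.
case/or3P => [/on_pathbP/key [->|/ra->] | /on_pathbP/key [->|/ra->] |
  /on_pathbP/key [->|/ra->]]; by rewrite ?orbT.
Qed.

Lemma hull_u : [/\ r \in Hs, u2 \in Hs, u3 \in Hs & u4 \in Hs].
Proof.
rewrite /Hs /hull4 !inE; split.
- by apply/orP; left; apply/on_pathbP; apply: on_path_start.
- by apply/orP; left; apply/on_pathbP; apply: on_path_end.
- by rewrite (_ : on_pathb e r u3 u3) ?orbT //; apply/on_pathbP; apply: on_path_end.
- by rewrite (_ : on_pathb e r u4 u4) ?orbT //; apply/on_pathbP; apply: on_path_end.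
Qed.


Variable f : V -> rat.
Hypothesis EQ : forall v,
  (f v * (deg e v)%:R - \sum_w f w * (e w v)%:R = f v)%R.
Hypothesis fS : forall v, pendant e v -> v \notin [:: r; u2; u3; u4] -> f v = 0%R.

Lemma sum_par y : y != r -> (forall c, par c = y -> f c = 0%R) ->
  (\sum_w f w * (e w y)%:R = f (par y))%R.
Proof.
move=> yr hc; rewrite (bigD1 (par y)) //=.
case: (par_edge yr) => ey _; rewrite esym ey mulr1 big1 ?addr0 // => w wne.
case ewy: (e w y); last by rewrite mulr0.
case: (edge_par ewy) => [wp | yp]; first by rewrite wp eqxx in wne.
by rewrite hc ?mul0r.
Qed.

Lemma no_child_pendant y : y != r -> (forall c, par c != y) -> pendant e y.
Proof.
move=> yr nc; rewrite /pendant /deg.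
have -> : [set w | e y w] = [set par y].
  apply/setP => w; rewrite !inE; apply/idP/eqP => [ew | ->].
    case: (edge_par ew) => [yp | //]; by move: (nc w); rewrite yp eqxx.
  by case: (par_edge yr).
by rewrite cards1.
Qed.

Lemma core_claim y : y \notin Hs -> f y = 0%R /\ f (par y) = 0%R.
Proof.
have [rH u2H u3H u4H] := hull_u.
set B := (\max_(v : V) dist v).+1.
have dB : forall v, (dist v < B)%N by move=> v; rewrite ltnS (leq_bigmax v).
suff : forall m y, (B - dist y <= m)%N -> y \notin Hs -> f y = 0%R /\ f (par y) = 0%R.
  by move=> H; apply: (H (B - dist y)%N).
elim => [|m IH] {}y.
  by move=> h; have := dB y; lia.
move=> hm yH.
have yr : y != r by apply: contraNneq yH => ->.
have hc : forall c, par c = y -> f c = 0%R /\ f (par c) = 0%R.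
  move=> c pc.
  have cr : c != r by apply: contra_eq_neq pc => ->; rewrite par_r eq_sym.
  apply: IH.
    case: (par_edge cr) => _; rewrite pc => dc; have := dB y; lia.
  apply: contra yH => cH; rewrite -pc; exact: hull_par.
have fy : f y = 0%R.
  case: (pickP (fun c => par c == y)) => [c /eqP pc | nc].
    by case: (hc c pc) => _; rewrite pc.
  apply: fS; first by apply: no_child_pendant => // c; rewrite nc.
  rewrite !inE; apply/negP => /or4P [] /eqP yu; move: yH; rewrite yu ?rH ?u2H ?u3H ?u4H //.
split => //.
have := EQ y; rewrite sum_par // => [|c /hc []//].
by rewrite fy mul0r sub0r => /eqP; rewrite oppr_eq0 => /eqP.
Qed.


Lemma outside_zero w : w \notin Hs -> f w = 0%R.
Proof. by case/core_claim. Qed.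

Lemma attach_zero h w : e h w -> w \notin Hs -> f h = 0%R.
Proof.
have [rH _ _ _] := hull_u.
move=> ehw wH; case: (edge_par ehw) => [hp | wp].
  by case: (core_claim wH); rewrite hp.
apply: outside_zero; apply: contra wH => hH.
have [hr | hr] := eqVneq h r; first by rewrite wp hr par_r.
by rewrite wp; exact: hull_par.
Qed.

End Rooted.

Section Lap.
Local Open Scope ring_scope.
Variables (V : finType) (e : rel V).

Definition vf (x : 'rV[rat]_#|V|) (w : V) := x 0 (enum_rank w).

Lemma sum_reidx (G : 'I_#|V| -> rat) :
  \sum_(i < #|V|) G i = \sum_(w : V) G (enum_rank w).
Proof. by rewrite (reindex (@enum_rank V)) //; apply: onW_bij; exact: enum_rank_bij. Qed.

Lemma lap_entry x v : (x *m laplacian e) 0 (enum_rank v) =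
  vf x v * (deg e v)%:R - \sum_w vf x w * (e w v)%:R.
Proof.
rewrite mxE sum_reidx.
under eq_bigr => w _ do rewrite mxE !enum_rankK mulrBr.
rewrite sumrB (bigD1 v) //= eqxx big1 ?addr0 // => w wv.
by rewrite (negPf wv) mulr0.
Qed.

Lemma lap_eigenP x : reflect (forall v, vf x v * (deg e v)%:R - \sum_w vf x w * (e w v)%:R = vf x v)
  (x <= eigenspace (laplacian e) 1)%MS.
Proof.
apply: (iffP eigenspaceP); rewrite scale1r.
  by move=> h v; rewrite -lap_entry h.
move=> h; apply/matrixP => i j; rewrite (ord1 i) -(enum_valK j) lap_entry h.
by rewrite /vf enum_valK.
Qed.

Lemma lap_sym : symmetric e -> (laplacian e)^T = laplacian e.
Proof.
move=> es; apply/matrixP => i j; rewrite !mxE es eq_sym.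
by case: eqP => // ->.
Qed.

End Lap.

Theorem mainTheorem11 (V : finType) (e : rel V) (u1 u2 u3 u4 : V) :
  is_tree e ->
  (4 <= npendant e)%N ->
  pendant e u1 -> pendant e u2 -> pendant e u3 -> pendant e u4 ->
  uniq [:: u1; u2; u3; u4] ->
  ((npendant e).-2 <= lap_mult e 1)%N ->
  (2 <= lap_mult (induced e (hull4 e u1 u2 u3 u4)) 1)%N.
Proof.
case=> es [eirr [econn ecard]] p4 pu1 pu2 pu3 pu4 uU hyp.
set Hs := hull4 e u1 u2 u3 u4.
set p := npendant e.
set L := laplacian e.
set ET := eigenspace L 1.
have rET : (p.-2 <= \rank ET)%N.
  by apply: leq_trans hyp _; apply: alg_le_geom; apply: lap_sym.
set S := [set v | pendant e v & v \notin [:: u1; u2; u3; u4]].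
have cS : (#|S| + 4 <= p)%N.
  set U := [set v in [:: u1; u2; u3; u4]].
  have cU : #|U| = 4%N by rewrite cardsE (card_uniqP uU).
  rewrite /p /npendant -(cardsID U [set x | pendant e x]) [X in (_ <= X)%N]addnC; apply: leq_add.
    apply: subset_leq_card; apply/subsetP => v; rewrite !inE => /andP [-> ->]//.
  rewrite -cU; apply: subset_leq_card; apply/subsetP => v; rewrite !inE.
  by case/or4P => /eqP ->; rewrite ?pu1 ?pu2 ?pu3 ?pu4 ?eqxx ?orbT.
pose Q : 'M[rat]_(#|V|, #|S|) := (\matrix_(i, j) (enum_val i == enum_val j)%:R)%R.
set K0 := (ET :&: kermx Q)%MS.
have rK0 : (2 <= \rank K0)%N.
  have h1 := mxrank_sum_cap ET (kermx Q).
  have h2 : (\rank (ET + kermx Q)%MS <= #|V|)%N := rank_leq_col _.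
  have h3 := mxrank_ker Q.
  have h4 : (\rank Q <= #|S|)%N := rank_leq_col Q.
  have h5 : (\rank Q <= #|V|)%N := rank_leq_row Q.
  rewrite /K0; lia.
have key : forall x : 'rV[rat]_#|V|, (x <= K0)%MS ->
    (forall v, (vf x v * (deg e v)%:R - \sum_w vf x w * (e w v)%:R = vf x v)%R) /\
    (forall v, pendant e v -> v \notin [:: u1; u2; u3; u4] -> vf x v = 0%R).
  move=> x; rewrite sub_capmx => /andP [xE xQ]; split.
    by apply/lap_eigenP.
  move=> v pv vU; have vS : v \in S by rewrite inE pv vU.
  move: xQ; rewrite sub_kermx => /eqP /matrixP /(_ ord0 (enum_rank_in vS v)).
  rewrite !mxE sum_reidx (bigD1 v) //= big1 ?addr0.
    by rewrite /Q mxE enum_rankK enum_rankK_in // eqxx mulr1.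
  move=> w wv; rewrite /Q mxE enum_rankK enum_rankK_in //.
  by rewrite (negPf wv) mulr0.
have zo : forall x, (x <= K0)%MS -> forall w, w \notin Hs -> vf x w = 0%R.
  by move=> x /key [EQ fS] w; exact: (outside_zero es econn ecard EQ fS).
have za : forall x, (x <= K0)%MS -> forall h w, e h w -> w \notin Hs -> vf x h = 0%R.
  by move=> x /key [EQ fS] h w; exact: (attach_zero es econn ecard EQ fS).
pose R : 'M[rat]_(#|V|, #|{: {x : V | x \in Hs}}|) :=
  (\matrix_(i, j) (enum_val i == val (enum_val j))%:R)%R.
have vfR : forall x (h : {x : V | x \in Hs}), vf (x *m R)%R h = vf x (val h).
  move=> x h; rewrite /vf mxE sum_reidx (bigD1 (val h)) //= big1 ?addr0.
    by rewrite /R mxE !enum_rankK eqxx mulr1.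
  by move=> w wv; rewrite /R mxE !enum_rankK (negPf wv) mulr0.
have claimA : forall x : 'rV[rat]_#|V|, (x <= K0)%MS ->
    ((x *m R)%R <= eigenspace (laplacian (induced e Hs)) 1)%MS.
  move=> x xK; have [EQ _] := key x xK; apply/lap_eigenP => h; rewrite !vfR.
  have sumE : (\sum_(k : {x : V | x \in Hs}) vf (x *m R)%R k * (induced e Hs k h)%:R =
      \sum_w vf x w * (e w (val h))%:R)%R.
    under eq_bigr => k _ do rewrite vfR.
    rewrite /induced -(big_sub Hs (fun w => vf x w * (e w (val h))%:R)%R).
    rewrite big_mkcond; apply: eq_bigr => w _; case: ifP => // /negbT wH.
    by rewrite zo // mul0r.
  rewrite sumE.
  have degE : (vf x (val h) * (deg (induced e Hs) h)%:R =
      vf x (val h) * (deg e (val h))%:R)%R.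
    have [->|nz] := eqVneq (vf x (val h)) 0%R; first by rewrite !mul0r.
    congr (_ * _%:R)%R; rewrite /deg -(card_imset _ val_inj); apply: eq_card => w.
    rewrite [in RHS]inE; apply/imsetP/idP => [[k]|ew].
      by rewrite inE => ek ->.
    case wH: (w \in Hs); last by rewrite (za x xK (val h) w ew (negbT wH)) eqxx in nz.
    by exists (exist _ w wH); rewrite // inE.
  by rewrite degE; exact: EQ.
have claimB : forall x : 'rV[rat]_#|V|, (x <= K0)%MS -> (x *m R)%R = 0%R -> x = 0%R.
  move=> x xK xR; apply/rowP => j; rewrite mxE -(enum_valK j).
  set w := enum_val j; case wH: (w \in Hs); last by apply: zo => //; rewrite wH.
  by rewrite -[LHS]/(vf x w) -(vfR x (exist _ w wH)) xR /vf mxE.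
have cap0 : (K0 :&: kermx R)%MS = 0%R.
  apply/eqP/rowV0P => v; rewrite sub_capmx sub_kermx => /andP [vK /eqP vR].
  exact: claimB.
have rKR : \rank (K0 *m R)%R = \rank K0.
  by rewrite -(mxrank_mul_ker K0 R) cap0 mxrank0 addn0.
have sub : ((K0 *m R)%R <= eigenspace (laplacian (induced e Hs)) 1)%MS.
  by apply/row_subP => i; rewrite row_mul; apply: claimA; exact: row_sub.
rewrite /lap_mult; apply: leq_trans rK0 _; rewrite -rKR.
by apply: leq_trans (mxrankS sub) _; exact: geom_le_alg.
Qed.
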